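(* For every $n\ge4$, the matroid $L_n$ is not liftable.
   Context: For $n\ge4$, $L_n$ is the rank-three paving matroid arising from $n$ lines in general position in $\mathbb{P}^2$ and their $\binom n2$ pairwise intersection points: equivalently, its ground set is the set of 2-element subsets $\{i,j\}\subseteq[n]$, and its lines (dependent hyperplanes) are $\ell_i=\{\{i,j\}:j\ne i\}$ for $i\in[n]$; its circuits are the 3-subsets of some $\ell_i$ and the 4-subsets containing no 3-subset of any $\ell_i$. For a matroid $N$ on a finite set $E$, the circuit variety $V_{\mathcal{C}(N)}$ is the set of tuples $(\gamma_e)_{e\in E}$ in $\mathbb{C}^3$ with $(\gamma_e)_{e\in S}$ linearly dependent for every dependent set $S$. $N$ is liftable if for every tuple $(\gamma_e)_{e\in E}$ in $\mathbb{C}^3$ spanning a plane $H$ and every $q\notin H$ there exist scalars $z_e$ such that $(\gamma_e+z_eq)\in V_{\mathcal{C}(N)}$ and the vectors $\gamma_e+z_eq$ do not all lie in a common plane. *)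

(* Defs.v *)
From mathcomp Require Import all_boot all_algebra.
From mathcomp Require Import reals.
From mathcomp.real_closed Require Import complex.
Set Implicit Arguments. Unset Strict Implicit. Unset Printing Implicit Defensive.
Import GRing.Theory.
Local Open Scope ring_scope.

(* The matrix whose rows are the vectors gamma_e, e ranging over S
   (as an indexed family: repeated vectors count separately). *)
Definition rows_of (K : fieldType) (E : finType) (S : {set E})
  (g : E -> 'rV[K]_3) : 'M[K]_(#|S|, 3) :=
  \matrix_(i < #|S|) g (enum_val i).

Definition lin_dep (K : fieldType) (E : finType) (S : {set E})
  (g : E -> 'rV[K]_3) : bool := ~~ row_free (rows_of S g).

Definition conf (K : fieldType) (E : finType) (g : E -> 'rV[K]_3) :=
  rows_of [set: E] g.

Definition in_circuit_variety (K : fieldType) (E : finType)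
  (dep : {set E} -> bool) (g : E -> 'rV[K]_3) : Prop :=
  forall S : {set E}, dep S -> lin_dep S g.

(* Liftability (rank-three setting, vectors in K^3). "Spanning a plane H"
   = the span of the gamma_e is 2-dimensional; "q notin H";
   "not all in a common plane" = they span K^3. *)
Definition liftable (K : fieldType) (E : finType)
  (dep : {set E} -> bool) : Prop :=
  forall (g : E -> 'rV[K]_3) (q : 'rV[K]_3),
    \rank (conf g) = 2%N ->
    ~~ (q <= conf g)%MS ->
    exists z : E -> K,
      in_circuit_variety dep (fun e => g e + z e *: q) /\
      \rank (conf (fun e => g e + z e *: q)) = 3%N.

Definition Ln_ground (n : nat) : finType := {s : {set 'I_n} | #|s| == 2%N}.

Definition Ln_line (n : nat) (i : 'I_n) : {set Ln_ground n} :=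
  [set e : Ln_ground n | i \in val e].

Definition Ln_circuit (n : nat) (C : {set Ln_ground n}) : bool :=
  ((#|C| == 3%N) && [exists i, C \subset Ln_line i])
  || ((#|C| == 4%N) &&
      [forall T : {set Ln_ground n},
         (T \subset C) && (#|T| == 3%N) ==> ~~ [exists i, T \subset Ln_line i]]).

Definition Ln_dep (n : nat) (S : {set Ln_ground n}) : bool :=
  [exists C : {set Ln_ground n}, Ln_circuit C && (C \subset S)].

(* Main.v *)
Require Import Defs.
From mathcomp Require Import all_boot all_algebra.
From mathcomp Require Import reals.
From mathcomp.real_closed Require Import complex.
From mathcomp Require Import ring.
Set Implicit Arguments. Unset Strict Implicit. Unset Printing Implicit Defensive.
Import GRing.Theory Num.Theory.
Local Open Scope ring_scope.

Definition vec (K : fieldType) (a b c : K) : 'rV[K]_3 := \row_(j < 3) [:: a; b; c]`_j.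

Lemma row_in_rows (K : fieldType) (E : finType) (S : {set E}) (g : E -> 'rV[K]_3) e :
  e \in S -> (g e <= rows_of S g)%MS.
Proof.
move=> He; have := row_sub (enum_rank_in He e) (rows_of S g).
by rewrite /rows_of rowK enum_rankK_in.
Qed.

Lemma dep3 (K : fieldType) (E : finType) (S : {set E}) (g : E -> 'rV[K]_3) x y w :
  lin_dep S g -> #|S| = 3%N -> x \in S -> y \in S -> w \in S ->
  exists2 u : 'rV_3, u != 0 & u *m (\matrix_(k < 3) [:: g x; g y; g w]`_k) = 0.
Proof.
move=> Hd HS Hx Hy Hw.
set M := \matrix_(k < 3) _.
have HM : (M <= rows_of S g)%MS.
  apply/row_subP => k; rewrite rowK.
  by case: k => [[|[|[|k]]] Hk] //=; apply: row_in_rows.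
have Hr : (\rank M < 3)%N.
  apply: leq_ltn_trans (mxrankS HM) _.
  move: Hd; rewrite /lin_dep /row_free => Hd.
  have Hle := rank_leq_row (rows_of S g).
  suff: forall r, r != #|S| -> (r <= #|S|)%N -> (r < 3)%N by apply.
  by move=> r; rewrite HS => H1; rewrite leq_eqVlt (negbTE H1).
have : ~~ row_free M by rewrite /row_free ltn_eqF.
rewrite -kermx_eq0 => /rowV0Pn [u Hu Hu0].
by exists u => //; apply/sub_kermxP.
Qed.

Lemma alg3 (K : fieldType) (u0 u1 u2 a b z1 z2 z3 : K) :
  u0 + u2 * a = 0 -> u1 + u2 * b = 0 -> u0 * z1 + (u1 * z2 + u2 * z3) = 0 ->
  [|| u0 != 0, u1 != 0 | u2 != 0] -> z3 = a * z1 + b * z2.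
Proof.
move=> h0 h1 h2 hn.
have e0 : u0 = - (u2 * a) by apply/eqP; rewrite -subr_eq0 opprK ?h0 ?h1.
have e1 : u1 = - (u2 * b) by apply/eqP; rewrite -subr_eq0 opprK ?h0 ?h1.
have [u20|u20] := eqVneq u2 0.
  by move: hn; rewrite e0 e1 u20 !mul0r oppr0 eqxx.
apply/eqP; rewrite -subr_eq0; apply/eqP.
apply: (mulfI u20); rewrite mulr0 -h2 e0 e1; ring.
Qed.

Lemma rel3 (K : fieldType) (a b z1 z2 z3 : K) (u : 'rV[K]_3) :
  u != 0 ->
  u *m (\matrix_(k < 3) [:: vec 1 0 z1; vec 0 1 z2; vec a b z3]`_k) = 0 ->
  z3 = a * z1 + b * z2.
Proof.
move=> Hu H.
have E (j : 'I_3) := congr1 (fun m : 'rV[K]_3 => m 0 j) H.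
have := E 0; have := E 1; have := E 2%:R.
rewrite !mxE !big_ord_recl big_ord0 /= !mxE /=.
move=> h2 h1 h0.
rewrite big_ord0 in h0; rewrite big_ord0 in h1.
rewrite !mulr0 !mulr1 !add0r !addr0 in h0 h1 h2.
apply: (alg3 h0 h1 h2).
apply: contraR Hu; rewrite !negb_or !negbK => /and3P [/eqP p0 /eqP p1 /eqP p2].
apply/eqP/rowP => j; rewrite mxE.
case: j => [[|[|[|j]]] Hj] //.
- by rewrite -p0; congr (u 0 _); apply: val_inj.
- by rewrite -p1; congr (u 0 _); apply: val_inj.
- by rewrite -p2; congr (u 0 _); apply: val_inj.
Qed.

Definition oo (m k : nat) : 'I_(m.+4) := inord k.

Lemma oeq m a b : (a < 4)%N -> (b < 4)%N -> (oo m a == oo m b) = (a == b).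
Proof.
move=> ha hb; rewrite -val_eqE /= !inordK //.
  by apply: leq_trans hb _.
by apply: leq_trans ha _.
Qed.

Lemma o_neq m a b : (a < 4)%N -> (b < 4)%N -> a != b -> oo m a != oo m b.
Proof. by move=> ha hb; rewrite oeq. Qed.

Lemma pr_proof m (i j : 'I_m.+4) : i != j -> #|[set i; j]| == 2%N.
Proof. by move=> h; rewrite cards2 h. Qed.

Definition pr m (i j : 'I_m.+4) (h : i != j) : Ln_ground m.+4 :=
  exist _ [set i; j] (pr_proof h).

Lemma in_pr m i j h c : (c \in val (@pr m i j h)) = (c == i) || (c == j).
Proof. by rewrite !inE. Qed.

Definition p01 m := pr (@o_neq m 0 1 isT isT isT).
Definition p02 m := pr (@o_neq m 0 2 isT isT isT).
Definition p03 m := pr (@o_neq m 0 3 isT isT isT).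
Definition p12 m := pr (@o_neq m 1 2 isT isT isT).
Definition p13 m := pr (@o_neq m 1 3 isT isT isT).
Definition p23 m := pr (@o_neq m 2 3 isT isT isT).

Definition ga (K : fieldType) m (e : Ln_ground m.+4) : K :=
  if oo m 0 \in val e then (if oo m 2 \in val e then 0 else 1)
  else if oo m 1 \in val e then (if oo m 2 \in val e then 1 else 0) else 1.
Definition gb (K : fieldType) m (e : Ln_ground m.+4) : K :=
  if oo m 0 \in val e then (if oo m 2 \in val e then 1 else if oo m 3 \in val e then 1 else 0)
  else if oo m 1 \in val e then 1 else 0.

Lemma vE (K : fieldType) (a b c : K) : vec a b 0 + c *: vec 0 0 1 = vec a b c.
Proof.
apply/rowP => j; rewrite !mxE.
by case: j => [[|[|[|j]]] Hj] //=; rewrite ?mulr0 ?addr0 ?mulr1 ?add0r.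
Qed.

Lemma neq_by m (x y : Ln_ground m.+4) c : c \in val x -> c \notin val y -> x != y.
Proof. move=> h1 h2; by apply: contraNneq h2 => <-. Qed.

Lemma tri (K : fieldType) m (z : Ln_ground m.+4 -> K)
  (Hz : in_circuit_variety (@Ln_dep m.+4)
          (fun e => vec (ga K e) (gb K e) 0 + z e *: vec 0 0 1))
  (x y w : Ln_ground m.+4) (c : 'I_m.+4) :
  x != y -> x != w -> y != w -> c \in val x -> c \in val y -> c \in val w ->
  ga K x = 1 -> gb K x = 0 -> ga K y = 0 -> gb K y = 1 ->
  z w = ga K w * z x + gb K w * z y.
Proof.
move=> hxy hxw hyw cx cy cw ax bx ay yb.
set T3 := x |: (y |: [set w]).
have HS : #|T3| = 3%N.
  by rewrite /T3 !cardsU1 cards1 !inE (negbTE hxy) (negbTE hxw) (negbTE hyw).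
have HD : Ln_dep T3.
  apply/existsP; exists T3; rewrite subxx andbT /Ln_circuit HS eqxx /=; apply/orP; left.
  apply/existsP; exists c; apply/subsetP => e.
  by rewrite /T3 /Ln_line !inE => /or3P [] /eqP ->.
have [u Hu Hu0] := dep3 (Hz T3 HD) HS (x := x) (y := y) (w := w)
   (ltac:(by rewrite !inE eqxx)) (ltac:(by rewrite !inE eqxx orbT))
   (ltac:(by rewrite !inE eqxx !orbT)).
move: Hu0; rewrite !vE ax bx ay yb => Hu0.
exact: rel3 Hu Hu0.
Qed.

Ltac gcomp := rewrite /ga /gb /p01 /p02 /p03 /p12 /p13 /p23 ?in_pr ?oeq //=.

Lemma pick_c m (e : Ln_ground m.+4) :
  oo m 0 \notin val e -> oo m 1 \notin val e -> e != p23 m ->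
  exists c, [/\ c \in val e, c != oo m 0, c != oo m 1, c != oo m 2 & c != oo m 3].
Proof.
move=> h0 h1 h23.
have [i [j [hij ev]]] := cards2P _ (valP e).
have hi : i \in val e by rewrite ev !inE eqxx.
have hj : j \in val e by rewrite ev !inE eqxx orbT.
have ne0 c : c \in val e -> c != oo m 0 by move=> hc; apply: contraNneq h0 => <-.
have ne1 c : c \in val e -> c != oo m 1 by move=> hc; apply: contraNneq h1 => <-.
have [i2|i2] := eqVneq i (oo m 2); last first.
  have [i3|i3] := eqVneq i (oo m 3); last by exists i; split => //; [apply: ne0|apply: ne1].
  have [j2|j2] := eqVneq j (oo m 2); last first.
    have [j3|j3] := eqVneq j (oo m 3); last by exists j; split => //; [apply: ne0|apply: ne1].
    by move: hij; rewrite i3 j3 eqxx.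
  case/negP: h23; apply/eqP/val_inj; rewrite ev i3 j2 /= setUC //.
have [j2|j2] := eqVneq j (oo m 2); first by move: hij; rewrite i2 j2 eqxx.
have [j3|j3] := eqVneq j (oo m 3); last by exists j; split => //; [apply: ne0|apply: ne1].
case/negP: h23; apply/eqP/val_inj; rewrite ev i2 j3 //.
Qed.

Lemma ga01 (K : fieldType) m : ga K (p01 m) = 1. Proof. by gcomp. Qed.
Lemma gb01 (K : fieldType) m : gb K (p01 m) = 0. Proof. by gcomp. Qed.
Lemma ga02 (K : fieldType) m : ga K (p02 m) = 0. Proof. by gcomp. Qed.
Lemma gb02 (K : fieldType) m : gb K (p02 m) = 1. Proof. by gcomp. Qed.
Lemma ga03 (K : fieldType) m : ga K (p03 m) = 1. Proof. by gcomp. Qed.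
Lemma gb03 (K : fieldType) m : gb K (p03 m) = 1. Proof. by gcomp. Qed.
Lemma ga12 (K : fieldType) m : ga K (p12 m) = 1. Proof. by gcomp. Qed.
Lemma gb12 (K : fieldType) m : gb K (p12 m) = 1. Proof. by gcomp. Qed.
Lemma ga13 (K : fieldType) m : ga K (p13 m) = 0. Proof. by gcomp. Qed.
Lemma gb13 (K : fieldType) m : gb K (p13 m) = 1. Proof. by gcomp. Qed.
Lemma ga23 (K : fieldType) m : ga K (p23 m) = 1. Proof. by gcomp. Qed.
Lemma gb23 (K : fieldType) m : gb K (p23 m) = 0. Proof. by gcomp. Qed.

Ltac dist := first [ by apply: (@neq_by _ _ _ (oo _ 0)); gcomp
                   | by apply: (@neq_by _ _ _ (oo _ 1)); gcomp
                   | by apply: (@neq_by _ _ _ (oo _ 2)); gcomp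
                   | by apply: (@neq_by _ _ _ (oo _ 3)); gcomp
                   | by apply: (@neq_by _ _ _ (oo _ 0)); rewrite eq_sym; gcomp
                   | by apply: (@neq_by _ _ _ (oo _ 1)); rewrite eq_sym; gcomp
                   | by apply: (@neq_by _ _ _ (oo _ 2)); rewrite eq_sym; gcomp
                   | by apply: (@neq_by _ _ _ (oo _ 3)); rewrite eq_sym; gcomp ].
Ltac side := try by (dist || gcomp).

Lemma zall (K : fieldType) m (z : Ln_ground m.+4 -> K)
  (Hz : in_circuit_variety (@Ln_dep m.+4)
          (fun e => vec (ga K e) (gb K e) 0 + z e *: vec 0 0 1))
  (h2 : (2 : K) != 0) (e : Ln_ground m.+4) :
  z e = ga K e * z (p01 m) + gb K e * z (p02 m).
Proof.
have T := tri Hz.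
set A := z (p01 m); set B := z (p02 m).
have mem a b k : (a < 4)%N -> (b < 4)%N -> k = a \/ k = b -> forall (h : oo m a != oo m b),
  oo m k \in val (pr h).
  by move=> ha hb hk h; rewrite in_pr; case: hk => ->; rewrite eqxx ?orbT.
have nb (x y : Ln_ground m.+4) c : c \in val x -> c \notin val y -> x != y := @neq_by m x y c.
have L0 : z (p03 m) = A + B.
  rewrite (T (p01 m) (p02 m) (p03 m) (oo m 0)); side.
  by rewrite ga03 gb03 !mul1r.
have L1 : z (p12 m) = A + z (p13 m).
  rewrite (T (p01 m) (p13 m) (p12 m) (oo m 1)); side.
  by rewrite ga12 gb12 !mul1r.
have L2 : z (p12 m) = z (p23 m) + B.
  rewrite (T (p23 m) (p02 m) (p12 m) (oo m 2)); side.
  by rewrite ga12 gb12 !mul1r.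
have L3 : z (p03 m) = z (p23 m) + z (p13 m).
  rewrite (T (p23 m) (p13 m) (p03 m) (oo m 3)); side.
  by rewrite ga03 gb03 !mul1r.
have Z23 : z (p23 m) = A.
  have e2 : (z (p23 m) - A) * 2 = (z (p23 m) + z (p13 m) - z (p03 m))
     + (z (p23 m) + B - z (p12 m)) + (z (p03 m) - A - B) + (z (p12 m) - A - z (p13 m)).
    rewrite /A /B; ring.
  move: e2; rewrite -L3 -L2 L0 L1 !subrr -/A -/B.
  move=> e2; have : (z (p23 m) - A) * 2 = 0 by rewrite e2; ring.
  move/eqP; rewrite mulf_eq0 (negbTE h2) orbF subr_eq0 => /eqP //.
have Z13 : z (p13 m) = B.
  by apply: (@addrI _ A); rewrite -L1 L2 Z23.
have C0 (f : Ln_ground m.+4) : oo m 0 \in val f -> z f = ga K f * A + gb K f * B.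
  move=> h0.
  have [->|n1] := eqVneq f (p01 m); first by rewrite ga01 gb01 mul1r mul0r addr0.
  have [->|n2] := eqVneq f (p02 m); first by rewrite ga02 gb02 mul1r mul0r add0r.
  rewrite (T (p01 m) (p02 m) f (oo m 0)) //; side.
  1,2: apply/eqP => E; subst f; by [rewrite eqxx in n1 | rewrite eqxx in n2].
have C1 (f : Ln_ground m.+4) : oo m 0 \notin val f -> oo m 1 \in val f -> z f = ga K f * A + gb K f * B.
  move=> h0 h1.
  have [->|n3] := eqVneq f (p13 m); first by rewrite ga13 gb13 Z13 mul1r mul0r add0r.
  rewrite (T (p01 m) (p13 m) f (oo m 1)) ?Z13 //; side.
  by apply/eqP => E; subst f; rewrite eqxx in n3.
have [h0|h0] := boolP (oo m 0 \in val e); first exact: C0.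
have [h1|h1] := boolP (oo m 1 \in val e); first exact: C1.
have [->|n23] := eqVneq e (p23 m); first by rewrite ga23 gb23 Z23 mul1r mul0r addr0.
have [c [ce c0 c1 c2 c3]] := pick_c h0 h1 n23.
have gae : ga K e = 1 by rewrite /ga (negbTE h0) (negbTE h1).
have gbe : gb K e = 0 by rewrite /gb (negbTE h0) (negbTE h1).
rewrite gae gbe mul1r mul0r addr0.
have n0c : oo m 0 != c by rewrite eq_sym.
have n1c : oo m 1 != c by rewrite eq_sym.
have X0 : oo m 0 \in val (pr n0c) by rewrite in_pr eqxx.
have X1 : oo m 1 \in val (pr n1c) by rewrite in_pr eqxx.
have Y0 : oo m 0 \notin val (pr n1c) by rewrite in_pr oeq //= [_ == c]eq_sym (negbTE c0).
have ga0 : ga K (pr n0c) = 1 by rewrite /ga X0 !in_pr !oeq //= ![_ == c]eq_sym (negbTE c2).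
have gb0 : gb K (pr n0c) = 0 by rewrite /gb X0 !in_pr !oeq //= ![_ == c]eq_sym (negbTE c2) (negbTE c3).
have ga1 : ga K (pr n1c) = 0 by rewrite /ga (negbTE Y0) X1 !in_pr !oeq //= ![_ == c]eq_sym (negbTE c2).
have gb1 : gb K (pr n1c) = 1 by rewrite /gb (negbTE Y0) X1.
rewrite (T (pr n0c) (pr n1c) e c) ?gae ?gbe ?mul1r ?mul0r ?addr0.
- by rewrite C0 // ga0 gb0 mul1r mul0r addr0.
- by apply: (@neq_by _ _ _ (oo m 0)).
- by apply: (@neq_by _ _ _ (oo m 0)).
- by apply: (@neq_by _ _ _ (oo m 1)).
- by rewrite in_pr eqxx orbT.
- by rewrite in_pr eqxx orbT.
- by [].
all: by [].
Qed.

Definition M2 (K : fieldType) (A B : K) : 'M[K]_(2, 3) :=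
  \matrix_(i < 2) (if i == 0 :> nat then vec 1 0 A else vec 0 1 B).

Lemma vec_sub (K : fieldType) (a b A B : K) : (vec a b (a * A + b * B) <= M2 A B)%MS.
Proof.
apply/submxP; exists (\row_(j < 2) [:: a; b]`_j); apply/rowP => j.
rewrite !mxE !big_ord_recl big_ord0 !mxE /=.
by case: j => [[|[|[|j]]] Hj] //=; ring.
Qed.

Lemma M2_pid (K : fieldType) : M2 (0 : K) 0 = pid_mx 2.
Proof.
apply/matrixP => i j; rewrite !mxE.
rewrite /vec. by case: i => [[|[|i]] Hi] //; case: j => [[|[|[|j]]] Hj]; rewrite ?mxE.
Qed.

Lemma final (K : fieldType) m (h2 : (2 : K) != 0) :
  ~ @liftable K (Ln_ground m.+4) (@Ln_dep m.+4).
Proof.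
move=> Hl.
pose g (e : Ln_ground m.+4) := vec (ga K e) (gb K e) 0.
pose q : 'rV[K]_3 := vec 0 0 1.
have H1 : (conf g <= M2 0 0)%MS.
  apply/row_subP => i; rewrite rowK /g.
  by have := vec_sub (ga K (enum_val i)) (gb K (enum_val i)) 0 0; rewrite !mulr0 addr0.
have H2 : (M2 0 0 <= conf g)%MS.
  apply/row_subP => i; rewrite rowK.
  case: i => [[|[|i]] Hi] //=.
    by have := row_in_rows g (in_setT (p01 m)); rewrite /g ga01 gb01.
  by have := row_in_rows g (in_setT (p02 m)); rewrite /g ga02 gb02.
have Hr : \rank (conf g) = 2%N.
  apply/eqP; rewrite eqn_leq; apply/andP; split.
    by apply: leq_trans (mxrankS H1) _; apply: rank_leq_row.
  by have := mxrankS H2; rewrite M2_pid rank_pid_mx.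
have Hq : ~~ (q <= conf g)%MS.
  apply/negP => Hq.
  have /submxP [D HD] := submx_trans Hq H1.
  have := congr1 (fun M : 'rV[K]_3 => M 0 2%:R) HD.
  rewrite !mxE !big_ord_recl big_ord0 !mxE /= !mulr0 !addr0 => /eqP.
  by rewrite oner_eq0.
have [z [Hz H3]] := Hl g q Hr Hq.
pose v := fun e => g e + z e *: q.
have H4 : (conf v <= M2 (z (p01 m)) (z (p02 m)))%MS.
  apply/row_subP => i; rewrite rowK /v /g /q vE (zall Hz h2 (enum_val i)).
  exact: vec_sub.
have := leq_trans (mxrankS H4) (rank_leq_row _).
by rewrite H3.
Qed.

Unset Implicit Arguments.
Theorem lemma6p3 (R : realType) (n : nat) :
  (4 <= n)%N -> ~ @liftable R[i] (Ln_ground n) (@Ln_dep n).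
Proof.
case: n => [|[|[|[|m]]]] // _.
apply: final.
by rewrite pnatr_eq0.
Qed.
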